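(* Let $C'$, $S$, $\widehat C$ be as in the context, and let $C'T'$ be a filling (with positive integer entries) of a Young diagram whose first column is $C'$. Let $\widehat C C'T'$ be the filling obtained by adjoining $\widehat C$ as a new first column on the left. If $(\widehat C,C')$ satisfies the Non-overlapping Condition, then \[ \mathrm{inv}(\widehat C C'T')=\mathrm{inv}(C'T')+\hat N . \]
   Context: A column is a finite sequence of entries listed top to bottom. $C'=(C'(1),\ldots,C'(c'))$ is a sequence of distinct positive integers and $S$ is a set of $c$ positive integers, $c\in\{c',c'+1\}$, such that with $s_1<\cdots<s_c$ the elements of $S$ and $t_1<\cdots<t_{c'}$ the entries of $C'$ sorted, $s_r\le t_r$ for $r\le c'$. The column $\widehat C$ of length $c$ is built as follows: every $x\in S\cap C'$ is placed in the row where $x$ occurs in $C'$; if $c=c'+1$, the largest element of $S\setminus C'$ is placed in row $c$; the remaining elements of $S\setminus C'$, in decreasing order, are placed in the rows occupied in $C'$ by the elements of $C'\setminus S$, in decreasing order (the $k$-th largest next to the $k$-th largest). (Since $c\ge c'$, $\widehat CC'T'$ is a filling of a Young diagram.) Pivots: row $r$ is a pivot row if either $r\le c'$ and $\widehat C(r)<C'(r)$, or $r=c'+1\le c$. With pivot rows $q_1,\ldots,q_p$, put $b_j=\widehat C(q_j)$, $d_j=C'(q_j)$ if $q_j\le c'$ and $d_j=\infty$ otherwise. Non-overlapping Condition: $p\le1$, or the intervals $[b_j,d_j]$ ($[b_j,\infty)$ if $d_j=\infty$) are pairwise disjoint. Define $\hat N=\sum_{j=1}^p\#\{r<q_j:\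 C'(r)\in S,\ b_j<C'(r)<d_j\}$. Inversion statistic of a filling $\sigma$ of a Young diagram (cells $(i,j)$, row $i$, column $j$, English convention): $\mathrm{inv}(\sigma)$ is the number of pairs of cells $(u,v)$ with $u=(j,k)$, $v=(i,k+1)$, $i<j$, such that $\sigma(u)<\sigma(v)<\sigma(w)$ where $w=(j,k+1)$ if this cell exists, and such that $\sigma(u)<\sigma(v)$ otherwise. *)

(* Defs.v *)
From mathcomp Require Import all_boot.
Set Implicit Arguments. Unset Strict Implicit. Unset Printing Implicit Defensive.

(* Conventions: a column is a [seq nat], listed top to bottom; rows are
   0-indexed (row r here = row r+1 in the paper).  A filling of a Young
   diagram is a [seq (seq nat)] listing its columns left to right. *)

Definition entry (F : seq (seq nat)) (k r : nat) : nat := nth 0 (nth [::] F k) r.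
Definition colsz (F : seq (seq nat)) (k : nat) : nat := size (nth [::] F k).

Definition is_filling (F : seq (seq nat)) : Prop :=
  sorted geq (map size F) /\ all (all (fun x => 0 < x)) F.

(* u = (row j, column k), v = (row i, column k+1), i < j,
   w = (row j, column k+1) if that cell exists. *)
Definition inv_pair (F : seq (seq nat)) (k j i : nat) : bool :=
  let a := entry F k j in
  let b := entry F k.+1 i in
  if j < colsz F k.+1 then (a < b) && (b < entry F k.+1 j) else a < b.

Definition inv_stat (F : seq (seq nat)) : nat :=
  \sum_(k < (size F).-1) \sum_(j < colsz F k)
     \sum_(i < j | i < colsz F k.+1) inv_pair F k j i.

Definition SmC (S C' : seq nat) : seq nat := sort geq [seq x <- S | x \notin C'].
Definition CmS (S C' : seq nat) : seq nat := sort geq [seq x <- C' | x \notin S].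
Definition SmC_rest (S C' : seq nat) : seq nat :=
  if size S == (size C').+1 then behead (SmC S C') else SmC S C'.

Definition Chat_entry (S C' : seq nat) (r : nat) : nat :=
  if r < size C' then
    let x := nth 0 C' r in
    if x \in S then x else nth 0 (SmC_rest S C') (index x (CmS S C'))
  else head 0 (SmC S C').

Definition Chat (S C' : seq nat) : seq nat := mkseq (Chat_entry S C') (size S).

(* hypotheses on (C', S) from the context *)
Definition admissible (C' S : seq nat) : Prop :=
  [/\ uniq C' && all (fun x => 0 < x) C', uniq S && all (fun x => 0 < x) S,
      (size S == size C') || (size S == (size C').+1)
    & forall r, r < size C' -> nth 0 (sort leq S) r <= nth 0 (sort leq C') r].

Definition is_pivot (S C' : seq nat) (r : nat) : bool :=
  ((r < size C') && (nth 0 (Chat S C') r < nth 0 C' r))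
  || ((r == size C') && (size C' < size S)).

Definition piv_b (S C' : seq nat) (q : nat) : nat := nth 0 (Chat S C') q.
(* upper endpoint d_j; None stands for infinity *)
Definition piv_d (C' : seq nat) (q : nat) : option nat :=
  if q < size C' then Some (nth 0 C' q) else None.

Definition lt_opt (d : option nat) (y : nat) : bool :=
  if d is Some x then x < y else false.
Definition below_opt (y : nat) (d : option nat) : bool :=
  if d is Some x then y < x else true.

Definition piv_disjoint (S C' : seq nat) (p q : nat) : bool :=
  lt_opt (piv_d C' p) (piv_b S C' q) || lt_opt (piv_d C' q) (piv_b S C' p).

Definition non_overlapping (S C' : seq nat) : Prop :=
  forall p q, p < size S -> q < size S -> p != q ->
    is_pivot S C' p -> is_pivot S C' q -> piv_disjoint S C' p q.

Definition Nhat (S C' : seq nat) : nat :=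
  \sum_(q < size S | is_pivot S C' q)
    #|[set r : 'I_q | (r < size C') && (nth 0 C' r \in S)
         && (piv_b S C' q < nth 0 C' r) && below_opt (nth 0 C' r) (piv_d C' q)]|.

(* Main.v *)
Require Import Defs.
From mathcomp Require Import all_boot zify.

Lemma count_drop_all (a : pred nat) s n :
  (forall i, n <= i < size s -> a (nth 0 s i)) -> count a (drop n s) = size s - n.
Proof.
move=> H; rewrite -size_drop; apply/eqP; rewrite -all_count.
apply/(all_nthP 0) => i; rewrite size_drop nth_drop => hi; apply: H; lia.
Qed.

Lemma count_take_all (a : pred nat) s n :
  (forall i, i < n -> i < size s -> a (nth 0 s i)) -> count a (take n s) = size (take n s).
Proof.
move=> H; apply/eqP; rewrite -all_count.
apply/(all_nthP 0) => i; rewrite size_take => hi.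
rewrite nth_take; last by move: hi; case: ifP => hh; lia.
apply: H; move: hi; case: ifP => hh; lia.
Qed.

Lemma splitc (a : pred nat) s n : count a s = count a (take n s) + count a (drop n s).
Proof. by rewrite -count_cat cat_take_drop. Qed.

Lemma cnt_lo (a : pred nat) s n : (forall i, n <= i < size s -> a (nth 0 s i)) ->
  size s - n <= count a s.
Proof.
move=> H; rewrite (splitc a s n) (@count_drop_all a s n H); lia.
Qed.

Lemma cnt_lo2 (a : pred nat) s n : (forall i, i < n -> i < size s -> a (nth 0 s i)) ->
  minn n (size s) <= count a s.
Proof.
move=> H; rewrite (splitc a s n) (@count_take_all a s n H) size_take; case: ifP; lia.
Qed.

Lemma cnt_hi (a : pred nat) s n : (forall i, i < n -> i < size s -> ~~ a (nth 0 s i)) ->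
  count a s <= size s - n.
Proof.
move=> H; have h1 := @count_take_all (predC a) s n H.
move: h1.
have := count_predC a (take n s).
have := count_size a (drop n s).
rewrite (splitc a s n) size_take size_drop; case: ifP; lia.
Qed.

Lemma cnt_hi2 (a : pred nat) s n : (forall i, n <= i < size s -> ~~ a (nth 0 s i)) ->
  count a s <= n.
Proof.
move=> H; have h1 := @count_drop_all (predC a) s n H.
move: h1.
have := count_predC a (drop n s).
have := count_size a (take n s).
rewrite (splitc a s n) size_take size_drop; case: ifP; lia.
Qed.

Lemma geq_trans : transitive geq.
Proof. by move=> y x z h1 h2; apply: leq_trans h2 h1. Qed.
Lemma geq_total : total geq.
Proof. by move=> x y; apply: leq_total. Qed.

Lemma sle_nth s i j : sorted leq s -> i <= j -> j < size s -> nth 0 s i <= nth 0 s j.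
Proof.
move=> ss hij hj; apply: (sorted_leq_nth leq_trans leqnn 0 ss) => //.
rewrite inE; exact: leq_ltn_trans hij hj.
Qed.

Lemma sge_nth s i j : sorted geq s -> i <= j -> j < size s -> nth 0 s j <= nth 0 s i.
Proof.
move=> ss hij hj; apply: (sorted_leq_nth geq_trans (fun x => leqnn x) 0 ss) => //.
rewrite inE; exact: leq_ltn_trans hij hj.
Qed.

Arguments sle_nth {s i j}.
Arguments sge_nth {s i j}.

Lemma count_adm (C S : seq nat) t : size C <= size S ->
  (forall r, r < size C -> nth 0 (sort leq S) r <= nth 0 (sort leq C) r) ->
  count (fun x => x <= t) C <= count (fun x => x <= t) S.
Proof.
move=> hsz hadm.
have pC : perm_eq (sort leq C) C by rewrite perm_sort perm_refl.
have pS : perm_eq (sort leq S) S by rewrite perm_sort perm_refl.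
rewrite -(permP pC) -(permP pS).
have sC := sort_sorted leq_total C; have sS := sort_sorted leq_total S.
have zC := size_sort leq C; have zS := size_sort leq S.
case En: (count _ (sort leq C)) => [//|m].
have hm : m < size C by rewrite -zC; have := count_size (fun x => x <= t) (sort leq C); lia.
have ht : nth 0 (sort leq C) m <= t.
  rewrite leqNgt; apply/negP => hlt.
  suff: m.+1 <= m by rewrite ltnn.
  rewrite -En; apply: cnt_hi2 => i /andP [h1 h2]; rewrite /= -ltnNge.
  exact: leq_trans hlt (sle_nth sC h1 h2).
have ht2 : nth 0 (sort leq S) m <= t by apply: leq_trans (hadm _ hm) ht.
have := @cnt_lo2 (fun x => x <= t) (sort leq S) m.+1.
have -> : minn m.+1 (size (sort leq S)) = m.+1 by rewrite zS; lia.
apply => i hi hi2; apply: leq_trans ht2; apply: sle_nth => //; lia.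
Qed.

Lemma count_split (a : pred nat) (S s : seq nat) :
  count a s = count a [seq y <- s | y \in S] + count a [seq y <- s | y \notin S].
Proof.
elim: s => //= x s ->; case: (x \in S) => /=; case: (a x) => /=; lia.
Qed.

Lemma inter_perm (C S : seq nat) : uniq C -> uniq S ->
  perm_eq [seq y <- S | y \in C] [seq y <- C | y \in S].
Proof.
move=> uC uS; apply: uniq_perm; rewrite ?filter_uniq //.
by move=> y; rewrite !mem_filter andbC.
Qed.

Lemma count_diff (C S : seq nat) t : uniq C -> uniq S ->
  count (fun x => x <= t) C <= count (fun x => x <= t) S ->
  count (fun x => x <= t) [seq y <- C | y \notin S] <=
  count (fun x => x <= t) [seq y <- S | y \notin C].
Proof.
move=> uC uS.
rewrite (count_split _ S C) (count_split _ C S) (permP (inter_perm _ _ uC uS)); by rewrite leq_add2l.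
Qed.

Lemma size_diff (C S : seq nat) : uniq C -> uniq S ->
  size [seq y <- S | y \notin C] + size C = size [seq y <- C | y \notin S] + size S.
Proof.
move=> uC uS.
have := count_split predT S C; have := count_split predT C S.
rewrite !count_predT (perm_size (inter_perm _ _ uC uS)); move=> -> ->; set a := size _; set b := size _; set c := size _; lia.
Qed.

Lemma key (C' S : seq nat) r : admissible C' S -> r < size C' ->
  nth 0 C' r \notin S -> nth 0 (Chat S C') r < nth 0 C' r.
Proof.
case=> /andP[uC pC] /andP[uS pS] hsz hadm hr hx.
have hCS : size C' <= size S by case/orP: hsz => /eqP ->.
rewrite /Chat nth_mkseq; last exact: leq_trans hr hCS.
rewrite /Chat_entry hr (negbTE hx).
set x := nth 0 C' r.
have xpos : 0 < x by apply: (all_nthP 0 pC).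
set A := CmS S C'; set D := SmC S C'.
have xA : x \in A by rewrite mem_sort mem_filter hx mem_nth.
set k := index x A.
have hk : k < size A by rewrite index_mem.
have Ak : nth 0 A k = x by rewrite nth_index.
set e := nat_of_bool (size S == (size C').+1).
have hrest : nth 0 (SmC_rest S C') k = nth 0 D (k + e).
  by rewrite /SmC_rest /e; case: (_ == _); rewrite ?nth_behead ?addn1 ?addn0.
rewrite hrest.
have sA : sorted geq A := sort_sorted geq_total _.
have sD : sorted geq D := sort_sorted geq_total _.
have zA : size A = size [seq y <- C' | y \notin S] by rewrite size_sort.
have zD : size D = size [seq y <- S | y \notin C'] by rewrite size_sort.
have hsD : size D = size A + e.
  have := size_diff _ _ uC uS; rewrite -zA -zD /e.
  by case/orP: hsz => /eqP ->; rewrite ?eqxx ?(gtn_eqF (ltnSn _)) ?eqn_leq ?ltnn /=; lia.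
case: (ltnP (k + e) (size D)) => hkD; last by rewrite nth_default.
rewrite ltnNge; apply/negP => hxy.
set y := nth 0 D (k + e) in hxy.
have yS : y \in S by move: (mem_nth 0 hkD); rewrite mem_sort mem_filter => /andP[].
have xy : x < y by rewrite ltn_neqAle hxy andbT; apply/eqP => exy; move: hx; rewrite -/x exy yS.
have c1 : count (fun z => z <= x) D <= size D - (k + e).+1.
  apply: cnt_hi => i hi hiD /=; rewrite -ltnNge.
  by apply: leq_trans xy (sge_nth sD _ hkD); rewrite -ltnS.
have c2 : size A - k <= count (fun z => z <= x) A.
  apply: cnt_lo => i /andP[hi hiA] /=; rewrite -Ak; exact: sge_nth sA hi hiA.
have c3 : count (fun z => z <= x) A <= count (fun z => z <= x) D.
  have pA : perm_eq A [seq y <- C' | y \notin S] by rewrite perm_sort perm_refl.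
  have pD : perm_eq D [seq y <- S | y \notin C'] by rewrite perm_sort perm_refl.
  rewrite (permP pA) (permP pD); apply: count_diff => //.
  exact: count_adm.
move: c1 c2 c3; rewrite hsD; lia.
Qed.

Lemma pointwise (C' S : seq nat) (T' : seq (seq nat)) j i :
  admissible C' S -> non_overlapping S C' -> j < size S -> i < j ->
  ((i < size C') && Defs.inv_pair (Chat S C' :: C' :: T') 0 j i) =
  is_pivot S C' j && ((((i < size C') && (nth 0 C' i \in S))
      && (piv_b S C' j < nth 0 C' i)) && below_opt (nth 0 C' i) (piv_d C' j)).
Proof.
move=> hadm hno hjS hij.
have hsz : (size S == size C') || (size S == (size C').+1) by case: hadm.
rewrite /Defs.inv_pair /entry /colsz /= /is_pivot /piv_b /piv_d.
set H := Chat S C'.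
case: (ltnP j (size C')) => hj.
- have hi : i < size C' by apply: ltn_trans hij hj.
  rewrite hi (ltn_eqF hj) /= orbF.
  case hCi: (nth 0 C' i \in S) => /=.
    case: (ltnP (nth 0 H j) (nth 0 C' i)) => h1 /=; last by rewrite andbF.
    case: (ltnP (nth 0 C' i) (nth 0 C' j)) => h2 /=; last by rewrite andbF.
    by rewrite (ltn_trans h1 h2).
  rewrite andbF; apply/negP => /andP[h1 h2].
  have ki := key _ _ _ hadm hi (negbT hCi).
  have := hno i j (ltn_trans hij hjS) hjS (negbT (ltn_eqF hij)).
  rewrite /is_pivot hi hj ki (ltn_trans h1 h2) /piv_disjoint /piv_d /piv_b hi hj /= -/H.
  move=> /(_ isT isT) /orP[] h; [move: h1 | move: h2]; rewrite ltnNge; apply/negP/negPn;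
  [exact: ltnW | exact: ltnW (ltn_trans h ki)].
- have ejc : j = size C'.
    apply/eqP; rewrite eqn_leq hj andbT -ltnS; apply: leq_trans hjS _.
    by case/orP: hsz => /eqP ->.
  have hi : i < size C' by rewrite -ejc.
  have hcS : size C' < size S by rewrite -ejc.
  rewrite hi ejc eqxx hcS /= andbT.
  case hCi: (nth 0 C' i \in S) => //=.
  apply/negP => h1.
  have ki := key _ _ _ hadm hi (negbT hCi).
  have := hno i j (ltn_trans hij hjS) hjS (negbT (ltn_eqF hij)).
  rewrite /is_pivot hi ki ejc ltnn eqxx /= -ejc hjS /piv_disjoint /piv_d /piv_b hi ejc ltnn /= orbF -/H.
  move=> /(_ isT isT) h; move: h1; rewrite ltnNge; apply/negP/negPn; exact: ltnW.
Qed.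

Theorem lemma4p6 (C' S : seq nat) (T' : seq (seq nat)) :
  admissible C' S ->
  is_filling (C' :: T') ->
  non_overlapping S C' ->
  inv_stat (Chat S C' :: C' :: T') = inv_stat (C' :: T') + Nhat S C'.
Proof.
move=> hadm _ hno.
rewrite /inv_stat /= big_ord_recl addnC; congr (_ + _).
have -> : colsz (Chat S C' :: C' :: T') 0 = size S by rewrite /colsz /= size_mkseq.
rewrite /Nhat [RHS]big_mkcond /=.
apply: eq_bigr => j _.
rewrite big_mkcond /=.
have hjS := ltn_ord j.
transitivity (\sum_(i < j) nat_of_bool ((i < size C') &&
     Defs.inv_pair [:: Chat S C', C' & T'] 0 j i)).
  by apply: eq_bigr => i _; rewrite /colsz /=; case: (i < size C').
case hpv : (is_pivot S C' j).
- rewrite cardsE -sum1_card [RHS]big_mkcond; apply: eq_bigr => i _.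
  rewrite (@pointwise C' S T' _ _ hadm hno hjS (ltn_ord i)) hpv /=.
  by rewrite unfold_in; case: (_ && _).
- apply: big1 => i _.
  by rewrite (@pointwise C' S T' _ _ hadm hno hjS (ltn_ord i)) hpv.
Qed.
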